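(* Let $X\sim\mathcal N(\mu,\sigma_1^2)$ and $Y\sim\mathcal N(\mu,\sigma_2^2)$ have the same mean, and let $T$ be any random variable independent of $X$ and of $Y$. Let $X'=\max(X,T)$ and $Y'=\max(Y,T)$. Then $|\mathbb{E}X'-\mathbb{E}Y'|\le C\,|\sigma_1-\sigma_2|$ for an absolute constant $C$.
   Context: $\sigma_1,\sigma_2\ge0$ are the standard deviations of $X$ and $Y$. *)

(* Defs.v *)
From HB Require Import structures.
From mathcomp Require Import all_boot all_order all_algebra.
From mathcomp Require Import all_classical all_reals all_analysis.
Set Implicit Arguments. Unset Strict Implicit. Unset Printing Implicit Defensive.
Import Order.TTheory GRing.Theory Num.Theory.
Local Open Scope classical_set_scope.
Local Open Scope ring_scope.

Definition indep_rv {d} {Omega : measurableType d} {R : realType}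
  (P : probability Omega R) (X Y : Omega -> R) : Prop :=
  forall A B : set R, measurable A -> measurable B ->
    P (X @^-1` A `&` Y @^-1` B) = (P (X @^-1` A) * P (Y @^-1` B))%E.

(* X ~ N(m, s^2) with s >= 0; the degenerate case s = 0 is the Dirac mass at m
   (the library's normal_pdf has a junk value at s = 0, so we special-case it). *)
Definition is_normal {d} {Omega : measurableType d} {R : realType}
  (P : probability Omega R) (X : {RV P >-> R}) (m s : R) : Prop :=
  forall A : set R, measurable A ->
    distribution P X A = (if s == 0 then \d_m A else normal_prob m s A).

(* Main.v *)
Require Import Defs.
From HB Require Import structures.
From mathcomp Require Import all_boot all_order all_algebra.
From mathcomp Require Import all_classical all_reals all_analysis.
From mathcomp Require Import ring lra measurable_realfun.
Import Order.TTheory GRing.Theory Num.Theory.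
Local Open Scope classical_set_scope.
Local Open Scope ring_scope.
Section A.
Context {R : realType}.
Local Notation leb := (@lebesgue_measure R).

Lemma Faffine_cvg (s mu : R) : 0 < s -> (fun z => z * s + mu) x @[x --> -oo] --> -oo.
Proof.
move=> s0; apply/cvgrNyPle => A.
near=> x.
rewrite -lerBrDr -ler_pdivlMr//.
Unshelve. all: end_near. Qed.

Lemma F'E (s mu : R) : (fun z => z * s + mu)^`()%classic = cst s.
Proof.
apply/funext => x; rewrite derive1E deriveD// deriveM// derive_cst derive_id.
by rewrite derive_cst scaler0 add0r addr0 /=; exact: mulr1.
Qed.

Definition Sset (mu s r : R) := [set z : R | mu + s * z <= r].
Definition Psi (mu s r : R) : \bar R :=
  (\int[leb]_z (\1_(Sset mu s r) z * normal_pdf 0 1 z)%:E)%E.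

Lemma pdf_scale (mu s z : R) : 0 < s ->
  normal_peak s * (normal_fun mu s (z * s + mu) * s) = normal_peak 1 * normal_fun 0 1 z.
Proof.
move=> s0; rewrite /normal_fun /normal_peak.
have -> : - (z * s + mu - mu) ^+ 2 / (s ^+ 2 *+ 2) = - (z - 0) ^+ 2 / (1 ^+ 2 *+ 2).
  by rewrite addrK subr0; field; rewrite gt_eqF.
rewrite -mulrnAr sqrtrM ?sqr_ge0// sqrtr_sqr gtr0_norm// expr1n mul1r invfM.
have : Num.sqrt (pi *+ 2) != 0 :> R by rewrite gt_eqF// sqrtr_gt0 mulrn_wgt0// pi_gt0.
by move=> h; field; rewrite h gt_eqF.
Qed.

Lemma normal_prob_sub (mu s r : R) : 0 < s ->
  normal_prob mu s `]-oo, r] =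
  (\int[leb]_(z in `]-oo, ((r - mu) / s)%R]) (normal_pdf 0 1 z)%:E)%E.
Proof.
move=> s0.
set F := (fun z => z * s + mu).
set b := (r - mu) / s.
have Fb : F b = r by rewrite /F /b divfK ?gt_eqF// subrK.
rewrite /normal_prob -{1}Fb.
rewrite increasing_ge0_integration_by_substitutionNy.
- apply: eq_integral => z _; rewrite F'E /= /F.
  rewrite /normal_pdf (gt_eqF s0) oner_eq0.
  rewrite /= /normal_fun /normal_peak; congr EFin; rewrite !fctE /= mulNr.
  rewrite -mulNr -mulrA.
  have := @pdf_scale mu s z s0; rewrite /normal_fun /normal_peak => ->.
  by [].
- by move=> x y _ _ xy; rewrite /F ltrD2r ltr_pM2r.
- by rewrite F'E => x _; exact: cvg_cst.
- by rewrite F'E; exact: is_cvg_cst.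
- by rewrite F'E; exact: cvg_cst.
- have dF x : derivable F x 1.
    by apply: derivableD; [apply: derivableM; [exact: derivable_id|exact: derivable_cst]|exact: derivable_cst].
  split; first by move=> x _; exact: dF.
  apply: cvg_at_left_filter.
  exact/differentiable_continuous/derivable1_diffP/dF.
- exact: Faffine_cvg.
- have cG := @continuous_normal_pdf R mu s (lt0r_neq0 s0).
  apply/continuous_within_itvNycP; split; [by move=> x _; exact: cG|]. apply: cvg_at_left_filter; exact: cG.
- by move=> x _; exact: normal_pdf_ge0.
Qed.

Lemma PsiE (mu s r : R) : Psi mu s r = (\int[leb]_(z in Sset mu s r) (normal_pdf 0 1 z)%:E)%E.
Proof.
rewrite integral_mkcond; apply: eq_integral => z _.
rewrite patchE indicE; case: (z \in Sset mu s r) => /=.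
  by rewrite mul1r.
by rewrite mul0r.
Qed.

Lemma cdfN_Psi (mu s r : R) : 0 <= s ->
  (if s == 0 then \d_mu `]-oo, r] else normal_prob mu s `]-oo, r]) = Psi mu s r.
Proof.
move=> s_ge0; have [s0|s0] := eqVneq s 0.
  subst s; rewrite diracE /Psi.
  have [mur|mur] := leP mu r.
    rewrite mem_set ?in_itv//=.
    rewrite -(integral_normal_pdf 0 1); apply: eq_integral => z _.
    by rewrite indicE mem_set ?mul1r// /Sset /= mul0r addr0.
  have -> : (mu \in [set` `]-oo, r]]) = false.
    by apply/negbTE; rewrite notin_setE /= in_itv /=; apply/negP; rewrite -ltNge.
  rewrite integral0_eq//.
  move=> z _.
  by rewrite indicE memNset ?mul0r// /Sset /= mul0r addr0; apply/negP; rewrite -ltNge.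
have {s0 s_ge0}s0 : 0 < s by rewrite lt_neqAle eq_sym s0 s_ge0.
rewrite normal_prob_sub// PsiE; congr (integral _ _ _).
apply/seteqP; split => z /=; rewrite /Sset /= in_itv /=.
  by rewrite ler_pdivlMr// => h; rewrite -lerBrDl mulrC.
by rewrite -lerBrDl mulrC -ler_pdivlMr.
Qed.

Lemma ind_diff (a b r : R) :
  `|((a <= r)%R)%:R - ((b <= r)%R)%:R| = (\1_[set` `[Num.min a b, Num.max a b[] r : R).
Proof.
rewrite indicE; wlog ab : a b / (a <= b)%R.
  move=> H; case: (boolP (a <= b)%R) => [ab|]; first exact: H.
  rewrite -ltNge => /ltW ba.
  rewrite distrC minC maxC; exact: H.
rewrite (min_l ab) (max_r ab) /= mem_setE in_itv /=.
case: (leP a r) => ar; case: (leP b r) => br /=.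
- by rewrite subrr normr0.
- by rewrite subr0 normr1.
- by have := le_trans ab br; rewrite leNgt ar.
- by rewrite subrr normr0.
Qed.

Lemma Jbound (z : R) : `|z| * expR (- z ^+ 2 / 2) <= expR (- z ^+ 2 / 4).
Proof.
have h1 : `|z| <= expR (z ^+ 2 / 4).
  apply: le_trans (expR_ge1Dx _).
  have : 0 <= (`|z| - 2) ^+ 2 by exact: sqr_ge0.
  have := real_normK (num_real z); nra.
have -> : - z ^+ 2 / 2 = - z ^+ 2 / 4 + - (z ^+ 2 / 4) by field.
rewrite expRD mulrA !mulNr expRN.
have e0 : 0 < expR (z ^+ 2 / 4) by exact: expR_gt0.
rewrite -[X in _ <= X]mul1r; apply: ler_wpM2r; first by rewrite invr_ge0 ltW.
by rewrite ler_pdivrMr// mul1r.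
Qed.

Definition Aset (mu s : R) : set (R * R) := [set p | mu + s * p.2 <= p.1].

Lemma mAset mu s : measurable (Aset mu s).
Proof.
have mf : measurable_fun setT (fun p : R * R => mu + s * p.2).
  exact: (measurable_funD (measurable_cst mu) (measurable_funM (measurable_cst s) measurable_snd)).
have := measurable_fun_ler mf (@measurable_fst _ _ R R) measurableT (Y := [set true]).
rewrite setTI; apply => //.
Qed.

Lemma mSset mu s r : measurable (Sset mu s r).
Proof.
have mf : measurable_fun setT (fun z : R => mu + s * z).
  exact: (measurable_funD (measurable_cst mu) (measurable_funM (measurable_cst s) (@measurable_id _ _ setT))).
have := measurable_fun_ler mf (measurable_cst r) measurableT (Y := [set true]).
rewrite setTI; apply => //.
Qed.

Lemma integrable_Psi mu s r :
  leb.-integrable setT (fun z => (\1_(Sset mu s r) z * normal_pdf 0 1 z)%:E).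
Proof.
have mf : measurable_fun setT (fun z => \1_(Sset mu s r) z * normal_pdf 0 1 z).
  apply: measurable_funM; first exact: measurable_indic (mSset _ _ _).
  exact: measurable_normal_pdf.
apply/integrableP; split; first exact/measurable_EFinP.
apply: (@le_lt_trans _ _ (\int[leb]_z (normal_pdf 0 1 z)%:E)%E).
  apply: ge0_le_integral => //.
  - apply/measurableT_comp => //; exact/measurable_EFinP.
  - by apply/measurable_EFinP; exact: measurable_normal_pdf.
  move=> z _; rewrite abse_EFin lee_fin normrM (ger0_norm (normal_pdf_ge0 _ _ _)).
  by rewrite ler_piMl ?normal_pdf_ge0// indicE; case: (_ \in _); rewrite ?normr0 ?normr1.
by rewrite integral_normal_pdf ltry.
Qed.


Lemma indA mu s (r z : R) : (\1_(Aset mu s) (r, z) : R) = ((mu + s * z <= r)%R)%:R.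
Proof.
rewrite indicE; have [h|h] := boolP (mu + s * z <= r)%R.
  by rewrite mem_set.
by rewrite memNset //; apply/negP.
Qed.

Lemma indS mu s (r z : R) : (\1_(Sset mu s r) z : R) = ((mu + s * z <= r)%R)%:R.
Proof.
rewrite indicE; have [h|h] := boolP (mu + s * z <= r)%R.
  by rewrite mem_set.
by rewrite memNset //; apply/negP.
Qed.

Definition hfun (mu s1 s2 : R) (p : R * R) : \bar R :=
  (`|\1_(Aset mu s1) p - \1_(Aset mu s2) p| * normal_pdf 0 1 p.2)%:E.

Lemma hfun_ge0 mu s1 s2 p : (0 <= hfun mu s1 s2 p)%E.
Proof. by rewrite lee_fin mulr_ge0 ?normal_pdf_ge0. Qed.

Lemma mhfun mu s1 s2 : measurable_fun setT (hfun mu s1 s2).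
Proof.
apply/measurable_EFinP; apply: measurable_funM.
  apply: measurableT_comp => //; apply: measurable_funB.
    exact: measurable_indic (mAset _ _).
  exact: measurable_indic (mAset _ _).
exact: measurableT_comp (measurable_normal_pdf _ _) measurable_snd.
Qed.

Lemma diff_le mu s1 s2 r :
  (`|Psi mu s1 r - Psi mu s2 r| <= \int[leb]_z hfun mu s1 s2 (r, z))%E.
Proof.
rewrite /Psi -integralB//; [|exact: integrable_Psi..].
apply: le_trans (le_abse_integral _ _ _) _ => //.
  by apply: emeasurable_funB; apply: measurable_int (integrable_Psi _ _ _).
rewrite le_eqVlt; apply/orP; left; apply/eqP; apply: eq_integral => z _.
rewrite -EFinB abse_EFin -mulrBl normrM (ger0_norm (normal_pdf_ge0 _ _ _)).
by rewrite /hfun /= !indA !indS.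
Qed.

Lemma inner mu s1 s2 (z : R) :
  (\int[leb]_r hfun mu s1 s2 (r, z) = (`|s1 - s2| * `|z| * normal_pdf 0 1 z)%:E)%E.
Proof.
under eq_integral => r _.
  rewrite /hfun /= !indA ind_diff mulrC EFinM.
  over.
rewrite ge0_integralZl//=.
- rewrite integral_indic//= setIT lebesgue_measure_itv /=.
  set a := mu + s1 * z; set b := mu + s2 * z.
  have key : Num.max a b - Num.min a b = `|s1 - s2| * `|z|.
    have -> : `|s1 - s2| * `|z| = `|a - b|.
      by rewrite -normrM /a /b; congr `|_|; ring.
    case: (leP a b) => ab.
      by rewrite distrC ger0_norm ?subr_ge0.
    by rewrite ger0_norm ?subr_ge0 ?ltW.
  have mM : Num.min a b <= Num.max a b by case: (leP a b) => // /ltW.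
  case: ifPn => [_|].
    by rewrite -EFinD -EFinM key mulrC.
  rewrite -leNgt lee_fin => Mm.
  have : Num.max a b - Num.min a b = 0 by apply/eqP; rewrite subr_eq0 eq_le Mm mM.
  by rewrite key => ->; rewrite mul0r mule0.
- by apply/measurable_EFinP; exact: measurable_indic.
- exact: (normal_pdf_ge0 0 1 z).
Qed.


Definition cN : R := normal_peak 1 / normal_peak (Num.sqrt 2).

Lemma zpdf_le (z : R) :
  `|z| * normal_pdf 0 1 z <= cN * normal_pdf 0 (Num.sqrt 2) z.
Proof.
have s2 : Num.sqrt 2 != 0 :> R by rewrite gt_eqF // sqrtr_gt0.
rewrite !normal_pdfE ?oner_eq0 //= /cN.
have p2 : normal_peak (Num.sqrt 2) != 0 :> R by rewrite gt_eqF // normal_peak_gt0.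
rewrite [in X in _ <= X]mulrA divfK // mulrCA ler_wpM2l ?normal_peak_ge0 //.
rewrite /normal_fun !subr0 sqr_sqrtr ?ler0n // expr1n.
have -> : (2 : R) *+ 2 = 4 by rewrite -mulr_natr; ring.
exact: Jbound.
Qed.

Lemma W1_bound mu s1 s2 :
  (\int[leb]_r \int[leb]_z hfun mu s1 s2 (r, z) <= (`|s1 - s2| * cN)%:E)%E.
Proof.
rewrite (@fubini_tonelli _ _ _ _ R leb leb (hfun mu s1 s2)); last 2 first.
  exact: mhfun.
  exact: hfun_ge0.
under eq_integral => z _ do rewrite inner.
apply: (@le_trans _ _ (\int[leb]_z ((`|s1 - s2| * cN)%:E * (normal_pdf 0 (Num.sqrt 2) z)%:E))%E).
  apply: ge0_le_integral => //.
  - by move=> z _; rewrite lee_fin !mulr_ge0 ?normal_pdf_ge0.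
  - apply/measurable_EFinP; apply: measurable_funM; last exact: measurable_normal_pdf.
    apply: measurable_funM => //; exact: measurableT_comp.
  - apply: emeasurable_funM => //; apply/measurable_EFinP; exact: measurable_normal_pdf.
  move=> z _; rewrite -EFinM lee_fin -mulrA -mulrA ler_wpM2l //.
  exact: zpdf_le.
rewrite ge0_integralZl //.
- by rewrite integral_normal_pdf mule1.
- apply/measurable_EFinP; exact: measurable_normal_pdf.
- by move=> z _; rewrite lee_fin normal_pdf_ge0.
- by rewrite lee_fin mulr_ge0 // /cN divr_ge0 // normal_peak_ge0.
Qed.


Definition Dfun mu s1 s2 (r : R) : \bar R := (\int[leb]_z hfun mu s1 s2 (r, z))%E.

Lemma Dfun_ge0 mu s1 s2 r : (0 <= Dfun mu s1 s2 r)%E.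
Proof. by apply: integral_ge0 => z _; exact: hfun_ge0. Qed.

Lemma mDfun mu s1 s2 : measurable_fun setT (Dfun mu s1 s2).
Proof.
exact: (@measurable_fun_fubini_tonelli_F _ _ _ _ R leb (hfun mu s1 s2) (mhfun _ _ _) (@hfun_ge0 _ _ _)).
Qed.

End A.

Section B.
Context {R : realType} {d : measure_display} {Omega : measurableType d}
  (P : probability Omega R).
Local Notation leb := (@lebesgue_measure R).

Lemma cdf_max (X T : {RV P >-> R}) r : indep_rv P X T ->
  cdf (X \max T : {RV P >-> R}) r = (cdf X r * cdf T r)%E.
Proof.
move=> iXT; rewrite /cdf /distribution /pushforward.
have -> : (X \max T) @^-1` `]-oo, r] = X @^-1` `]-oo, r] `&` T @^-1` `]-oo, r].
  apply/seteqP; split => w /=; rewrite !in_itv /=.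
  by rewrite ge_max => /andP. by move=> [a b]; rewrite ge_max a b.
exact: iXT.
Qed.

Lemma cdf_fin (Z : {RV P >-> R}) r : cdf Z r \is a fin_num.
Proof.
by rewrite ge0_fin_numE ?cdf_ge0 // (le_lt_trans (cdf_le1 _ _)) ?ltry.
Qed.

Lemma ccdfE (Z : {RV P >-> R}) r : ccdf Z r = (1 - cdf Z r)%E.
Proof. by rewrite -(cdf_ccdf_1 Z r) [X in (X - _)%E]addeC addeK // cdf_fin. Qed.

Lemma emul_le (x y t : \bar R) : x \is a fin_num -> y \is a fin_num ->
  (0 <= t)%E -> (t <= 1)%E -> (`|x * t - y * t| <= `|x - y|)%E.
Proof.
move: x y t => [x||] // [y||] // [t||] // _ _; rewrite ?lee_fin => t0 t1 //.
by rewrite -mulrBl normrM (ger0_norm t0) ler_piMr.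
Qed.

Lemma ptbound (X Y T : {RV P >-> R}) r : indep_rv P X T -> indep_rv P Y T ->
  (`|cdf (X \max T : {RV P >-> R}) r - cdf (Y \max T : {RV P >-> R}) r| <= `|cdf X r - cdf Y r|)%E /\
  (`|ccdf (X \max T : {RV P >-> R}) r - ccdf (Y \max T : {RV P >-> R}) r| <= `|cdf X r - cdf Y r|)%E.
Proof.
move=> iX iY.
have h : (`|cdf (X \max T : {RV P >-> R}) r - cdf (Y \max T : {RV P >-> R}) r| <= `|cdf X r - cdf Y r|)%E.
  by rewrite !cdf_max //; apply: emul_le; rewrite ?cdf_fin ?cdf_ge0 ?cdf_le1.
split => //.
rewrite !ccdfE.
move: h; move: (cdf_fin (X \max T : {RV P >-> R}) r) (cdf_fin (Y \max T : {RV P >-> R}) r).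
move: (cdf (X \max T : {RV P >-> R}) r) (cdf (Y \max T : {RV P >-> R}) r) => [a||] // [b||] // _ _.
move=> h; apply: le_trans h; rewrite -!EFinB !abse_EFin lee_fin.
have -> : 1 - a - (1 - b) = b - a by ring.
by rewrite distrC.
Qed.


Lemma halfbound (f1 f2 g : R -> \bar R) (D : set R) : measurable D ->
  measurable_fun setT f1 -> measurable_fun setT f2 -> measurable_fun setT g ->
  (forall r, 0 <= f1 r)%E -> (forall r, 0 <= f2 r)%E -> (forall r, 0 <= g r)%E ->
  (\int[leb]_(r in D) f1 r)%E \is a fin_num -> (\int[leb]_(r in D) f2 r)%E \is a fin_num ->
  (forall r, `|f1 r - f2 r| <= g r)%E ->
  (`|\int[leb]_(r in D) f1 r - \int[leb]_(r in D) f2 r| <= \int[leb]_r g r)%E.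
Proof.
move=> mD mf1 mf2 mg f10 f20 g0 fin1 fin2 fg.
have int (f : R -> \bar R) : measurable_fun setT f -> (forall r, 0 <= f r)%E ->
    (\int[leb]_(r in D) f r)%E \is a fin_num -> leb.-integrable D f.
  move=> mf f0 fin; apply/integrableP; split; first exact: measurable_funTS.
  under eq_integral => r _ do rewrite gee0_abs//.
  by rewrite -ge0_fin_numE ?integral_ge0.
rewrite -integralB //; [|exact: int|exact: int].
apply: le_trans (le_abse_integral _ _ _) _ => //.
  by apply: emeasurable_funB; apply: measurable_funTS.
apply: (@le_trans _ _ (\int[leb]_(r in D) g r)%E).
  apply: ge0_le_integral => //.
  - apply: measurableT_comp => //; apply: emeasurable_funB; exact: measurable_funTS.
  - exact: measurable_funTS.
apply: ge0_subset_integral => //.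
Qed.

Lemma ereal_tri (a1 b1 a2 b2 : \bar R) : a1 \is a fin_num -> b1 \is a fin_num ->
  a2 \is a fin_num -> b2 \is a fin_num ->
  (`|(a1 - b1) - (a2 - b2)| <= `|a1 - a2| + `|b1 - b2|)%E.
Proof.
move: a1 b1 a2 b2 => [a1||] // [b1||] // [a2||] // [b2||] // _ _ _ _.
rewrite -!EFinB !abse_EFin -EFinD lee_fin.
have -> : a1 - b1 - (a2 - b2) = (a1 - a2) - (b1 - b2) by ring.
exact: ler_normB.
Qed.

End B.


Local Notation leb := (@lebesgue_measure _).

Theorem lemma8 (R : realType) :
  exists C : R, forall (d : measure_display) (Omega : measurableType d)
    (P : probability Omega R) (X Y T : {RV P >-> R}) (mu s1 s2 : R),
    0 <= s1 -> 0 <= s2 ->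
    is_normal X mu s1 -> is_normal Y mu s2 ->
    indep_rv P X T -> indep_rv P Y T ->
    P.-integrable setT (fun w => (Num.max (X w) (T w))%:E) ->
    P.-integrable setT (fun w => (Num.max (Y w) (T w))%:E) ->
    (`| \int[P]_w (Num.max (X w) (T w))%:E - \int[P]_w (Num.max (Y w) (T w))%:E |
      <= (C * `|s1 - s2|)%:E)%E.
Proof.
exists (2 * cN) => d Omega P X Y T mu s1 s2 s1p s2p nX nY iX iY intX intY.
pose WX : {RV P >-> R} := X \max T.
pose WY : {RV P >-> R} := Y \max T.
have LX : (WX : Omega -> R) \in Lfun P 1 by apply/Lfun1_integrable.
have LY : (WY : Omega -> R) \in Lfun P 1 by apply/Lfun1_integrable.
have LX' : Lfun P 1 WX by move: LX; rewrite inE.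
have LY' : Lfun P 1 WY by move: LY; rewrite inE.
have -> : (\int[P]_w (Num.max (X w) (T w))%:E = 'E_P[WX])%E by rewrite expectation_def.
have -> : (\int[P]_w (Num.max (Y w) (T w))%:E = 'E_P[WY])%E by rewrite expectation_def.
have fX := expectation_fin_num LX.
have fY := expectation_fin_num LY.
rewrite (expectation_cdf_ccdf LX') in fX *.
rewrite (expectation_cdf_ccdf LY') in fY *.
rewrite fin_numB in fX; rewrite fin_numB in fY.
move/andP: fX => [fA1 fB1]; move/andP: fY => [fA2 fB2].
apply: le_trans (ereal_tri _ _ _ _ fA1 fB1 fA2 fB2) _.
have cdfX r : cdf X r = Psi mu s1 r by rewrite -cdfN_Psi // -nX.
have cdfY r : cdf Y r = Psi mu s2 r by rewrite -cdfN_Psi // -nY.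
have pt r := ptbound P X Y T r iX iY.
have bnd r : (`|cdf X r - cdf Y r| <= Dfun mu s1 s2 r)%E by rewrite cdfX cdfY; exact: diff_le.
have H1 : (`|\int[leb]_(r in `[0%R, +oo[) ccdf WX r - \int[leb]_(r in `[0%R, +oo[) ccdf WY r|
    <= \int[leb]_r Dfun mu s1 s2 r)%E.
  apply: halfbound => //.
  - exact: ccdf_measurable.
  - exact: ccdf_measurable.
  - exact: mDfun.
  - by move=> r; exact: Dfun_ge0.
  - by move=> r; apply: le_trans (bnd r); exact: (pt r).2.
have H2 : (`|\int[leb]_(r in `]-oo, 0%R[) cdf WX r - \int[leb]_(r in `]-oo, 0%R[) cdf WY r|
    <= \int[leb]_r Dfun mu s1 s2 r)%E.
  apply: halfbound => //.
  - exact: cdf_measurable.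
  - exact: cdf_measurable.
  - exact: mDfun.
  - by move=> r; exact: Dfun_ge0.
  - by move=> r; apply: le_trans (bnd r); exact: (pt r).1.
apply: le_trans (leeD H1 H2) _.
have W := W1_bound mu s1 s2.
apply: le_trans (leeD W W) _.
rewrite -EFinD lee_fin le_eqVlt; apply/orP; left; apply/eqP; ring.
Qed.
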